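(* Let $\Gamma=\mathsf{PSL}_2(\mathbb{Z})=\langle U,S\mid U^3,S^2\rangle$, with $U$ of order $3$ and $S$ of order $2$. For $n\ge 0$ let $t(n)$ be the number of words of length $n$ in the alphabet $\{U,S\}$ that are equal to the identity in $\Gamma$. Then for every prime $p>3$, $t(p)\equiv 0 \pmod p$.
   Context: A word of length $n$ is a sequence of $n$ letters each equal to $U$ or $S$, read as the product of the corresponding elements of $\Gamma$. *)

(* Defs.v *)
From HB Require Import structures.
From mathcomp Require Import all_boot all_order all_algebra.
Set Implicit Arguments. Unset Strict Implicit. Unset Printing Implicit Defensive.
Import GRing.Theory Num.Theory.
Local Open Scope ring_scope.

Definition mx2 (a b c d : int) : 'M[int]_2 :=
  \matrix_(i < 2, j < 2)
    (if (i == 0 :> nat) then (if (j == 0 :> nat) then a else b)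
     else (if (j == 0 :> nat) then c else d)).

(* Lifts in SL_2(Z) of the generators of PSL_2(Z):
   S = [[0,-1],[1,0]] (order 2 in PSL_2), U = [[0,-1],[1,1]] (order 3 in PSL_2). *)
Definition matS : 'M[int]_2 := mx2 0 (-1) 1 0.
Definition matU : 'M[int]_2 := mx2 0 (-1) 1 1.

Definition letter (b : bool) : 'M[int]_2 := if b then matU else matS.

Definition wordval (w : seq bool) : 'M[int]_2 :=
  foldr (fun b M => letter b *m M) 1%:M w.

(* A matrix of SL_2(Z) is trivial in PSL_2(Z) = SL_2(Z)/{±I} *)
Definition trivial_in_PSL (M : 'M[int]_2) : bool :=
  (M == 1%:M) || (M == - 1%:M).

Definition t (n : nat) : nat :=
  #|[set w : n.-tuple bool | trivial_in_PSL (wordval w)]|.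

(* Main.v *)
Require Import Defs.
From mathcomp Require Import all_boot all_order all_algebra.
From mathcomp Require Import fingroup perm action cyclic pgroup sylow.
Set Implicit Arguments. Unset Strict Implicit. Unset Printing Implicit Defensive.
Import GRing.Theory.
Local Open Scope ring_scope.

Lemma mx2_mul a b c d a' b' c' d' :
  mx2 a b c d *m mx2 a' b' c' d' =
  mx2 (a*a' + b*c') (a*b' + b*d') (c*a' + d*c') (c*b' + d*d').
Proof.
apply/matrixP => i j; rewrite !mxE !big_ord_recl big_ord0 !mxE addr0.
by case: i => [[|[|//]] ?]; case: j => [[|[|//]] ?].
Qed.

Lemma mx2_1 : 1%:M = mx2 1 0 0 1 :> 'M[int]_2.
Proof.
apply/matrixP => i j; rewrite !mxE.
by case: i => [[|[|//]] ?]; case: j => [[|[|//]] ?].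
Qed.

Lemma mx2_opp a b c d : - mx2 a b c d = mx2 (-a) (-b) (-c) (-d).
Proof.
apply/matrixP => i j; rewrite !mxE.
by case: i => [[|[|//]] ?]; case: j => [[|[|//]] ?].
Qed.

Lemma mx2_eq a b c d a' b' c' d' :
  (mx2 a b c d == mx2 a' b' c' d') = [&& a == a', b == b', c == c' & d == d'].
Proof.
apply/eqP/and4P => [E|[/eqP-> /eqP-> /eqP-> /eqP->]] //.
have F i j : mx2 a b c d i j = mx2 a' b' c' d' i j by rewrite E.
have := F 0 0; have := F 0 1; have := F 1 0; have := F 1 1.
by rewrite !mxE /= => -> -> -> ->.
Qed.

Lemma S2 : matS *m matS = - 1%:M.
Proof. by rewrite /matS mx2_mul mx2_1 mx2_opp. Qed.
Lemma U3 : matU *m (matU *m matU) = - 1%:M.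
Proof. by rewrite /matU !mx2_mul mx2_1 mx2_opp. Qed.

Lemma letter_inv b : exists A, (A *m letter b = 1%:M)%R /\ (letter b *m A = 1%:M)%R.
Proof.
case: b => /=.
  exists (- (matU *m matU)); rewrite mulNmx mulmxN; split.
    by rewrite -mulmxA U3 opprK.
  by rewrite U3 opprK.
by exists (- matS); rewrite mulNmx mulmxN S2 opprK.
Qed.

Lemma conj_triv (C D M : 'M[int]_2) : C *m D = 1%:M -> trivial_in_PSL M ->
  trivial_in_PSL (C *m M *m D).
Proof.
move=> CD /orP[/eqP->|/eqP->]; rewrite /trivial_in_PSL.
  by rewrite mulmx1 CD eqxx.
by rewrite mulmxN mulNmx mulmx1 CD eqxx orbT.
Qed.

Lemma triv_rot1 (s : seq bool) :
  trivial_in_PSL (wordval (rot 1 s)) = trivial_in_PSL (wordval s).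
Proof.
case: s => [|x s] //; rewrite rot1_cons -cats1.
have -> : wordval (s ++ [:: x]) = wordval s *m letter x.
  elim: s => [|y s IH] /=; first by rewrite mulmx1 mul1mx.
  by rewrite IH mulmxA.
rewrite /=; have [A [HA1 HA2]] := letter_inv x.
apply/idP/idP => H.
  have := conj_triv HA2 H; by rewrite !mulmxA -(mulmxA _ (letter x)) HA2 mulmx1.
have := conj_triv HA1 H; by rewrite !mulmxA HA1 mul1mx.
Qed.

Lemma trivN M : trivial_in_PSL (- M) = trivial_in_PSL M.
Proof.
rewrite /trivial_in_PSL eqr_oppLR [- M == _]eqr_oppLR opprK orbC //.
Qed.

Local Close Scope ring_scope.
Lemma nseqU q r : trivial_in_PSL (wordval (nseq (q * 3 + r) true)) =
  trivial_in_PSL (wordval (nseq r true)).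
Proof.
elim: q => [|q IH] //; rewrite mulSn -addnA.
by rewrite -IH /= !mulmxA -(mulmxA matU) U3 mulNmx mul1mx trivN.
Qed.

Lemma nseqS q r : trivial_in_PSL (wordval (nseq (q * 2 + r) false)) =
  trivial_in_PSL (wordval (nseq r false)).
Proof.
elim: q => [|q IH] //; rewrite mulSn -addnA.
by rewrite -IH /= !mulmxA S2 mulNmx mul1mx trivN.
Qed.

Lemma nontriv_const b n : prime n -> 3 < n -> ~~ trivial_in_PSL (wordval (nseq n b)).
Proof.
move=> pn n3; case: b.
  rewrite (divn_eq n 3) nseqU.
  have : n %% 3 < 3 by rewrite ltn_mod.
  have : n %% 3 != 0.
    apply/negP => /eqP H; have : 3 %| n by rewrite /dvdn H.
    by move/(prime_nt_dvdP pn (d:=3) isT) => E; rewrite -E in n3.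
  case: (n %% 3) => [|[|[|//]]] // _ _ /=;
  by rewrite /trivial_in_PSL /matU ?mulmx1 ?mx2_mul mx2_1 mx2_opp !mx2_eq.
rewrite (divn_eq n 2) nseqS.
have : n %% 2 = 1%N.
  have : odd n by case: (even_prime pn) => // E; rewrite E in n3.
  by rewrite modn2 => ->.
move=> -> /=.
by rewrite /trivial_in_PSL /matS ?mulmx1 mx2_1 mx2_opp !mx2_eq.
Qed.

Lemma rot1_const (x : bool) s : rcons s x = x :: s -> s = nseq (size s) x.
Proof.
elim: s => [|y s IH] //= [->] H; congr cons; exact: IH.
Qed.

Local Open Scope group_scope.

Section Main.
Variable p : nat.
Local Notation T := (p.-tuple bool).
Definition rotf (t : T) : T := rot_tuple 1 t.
Lemma rotf_inj : injective rotf.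
Proof. move=> t1 t2 /(congr1 val) /= /rot_inj H; exact: val_inj. Qed.
Definition rperm : {perm T} := perm rotf_inj.

Lemma iter_rot n (s : seq bool) : n <= size s -> iter n (rot 1) s = rot n s.
Proof.
elim: n => [|n IH] Hn /=; first by rewrite rot0.
by rewrite IH ?(ltnW Hn) // -rotD // add1n.
Qed.

Lemma rpermX n (t : T) : val ((rperm ^+ n)%g t) = iter n (rot 1) (val t).
Proof.
rewrite permX; elim: n => [|n IH] //=.
by rewrite permE /= IH.
Qed.

Lemma rpermp : (rperm ^+ p = 1)%g.
Proof.
apply/permP => t; rewrite perm1; apply: val_inj.
by rewrite rpermX iter_rot ?size_tuple // -{1}(size_tuple t) rot_size.
Qed.

End Main.

Theorem proposition1 (p : nat) : prime p -> 3 < p -> t p %% p = 0.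
Proof.
move=> pp p3.
set S := [set w : p.-tuple bool | trivial_in_PSL (wordval w)].
have pG : p.-group <[rperm p]>.
  rewrite /pgroup -orderE; apply: pnat_dvd (pnat_id pp).
  by rewrite order_dvdn rpermp.
have nS : [acts <[rperm p]>, on S | 'P].
  rewrite cycle_subG; apply/astabsP => w.
  by rewrite /= !inE /aperm permE /= triv_rot1.
have := pgroup_fix_mod pG nS.
have -> : 'Fix_(S | 'P)(<[rperm p]>) = set0.
  apply/setP => w; rewrite !inE; apply/negbTE/negP => /andP[Hw Hf].
  have := subsetP Hf _ (cycle_id (rperm p)); rewrite inE /= /aperm /rperm permE => /eqP /(congr1 val) /=.
  clear Hf; case: w Hw => [[|x s] sz] //=; first by rewrite -(eqP sz) in pp.
  rewrite rot1_cons => Htr /rot1_const Hs.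
  have Hn : size s = p.-1 by rewrite -(eqP sz).
  move: Htr; rewrite Hs Hn -[(letter x *m _)%R]/(wordval (nseq p.-1.+1 x)) (prednK (prime_gt0 pp)).
  by move/negP: (nontriv_const x pp p3).
by rewrite cards0 mod0n => /eqP; rewrite /t -/S => /eqP.
Qed.
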